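(* Let $k\ge 2$, $q\in\{1,\dots,k-1\}$, $n\ge 3$ and $i\ge 1$ be integers. Consider the cylindrical Lights Out game on a board with $i$ rows and $n$ columns whose lights have $k$ states, with every light initially in state $k-q$. Define the integer sequence $S_0=0$, $S_1=-q$, and $S_j=-q-S_{j-2}-3S_{j-1}$ for $j\ge 2$. Then the game is one-pass solvable if and only if $S_i\equiv 0 \pmod{k}$.
   Context: Cylindrical Lights Out game: a grid of buttons with $i$ rows (numbered $1,\dots,i$ from top to bottom) and $n$ columns, whose left and right sides are identified, so column $1$ and column $n$ are adjacent; rows do not wrap around. Each button has a light whose state is an element of $\mathbb{Z}/k\mathbb{Z}$, state $0$ meaning ''off''. Pressing a button once adds $1 \pmod k$ to the state of its own light and to the states of the lights orthogonally adjacent to it (above, below, left, right, where they exist, with columns taken cyclically). One-pass chasing: for $r=2,3,\dots,i$ in turn, press each button in row $r$ the number of times in $\{0,\dots,k-1\}$ needed to bring the light directly above it (in row $r-1$) to state $0$. The game is one-pass solvable if after this procedure all lights on the board are in state $0$. *)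

(* Defs.v *)
From mathcomp Require Import all_boot all_order all_algebra.
Set Implicit Arguments. Unset Strict Implicit. Unset Printing Implicit Defensive.
Import GRing.Theory Num.Theory.

(* A board state: row r (1 <= r <= i) and column c (0 <= c < n) give the
   state of the light, a natural number read modulo k (always kept < k). *)
Definition board := nat -> nat -> nat.

Definition affected (i n r c r' c' : nat) : bool :=
  [&& 1 <= r' <= i, c' < n &
    ((r' == r) && [|| c' == c, c' == (c.+1 %% n) | c == (c'.+1 %% n)])
    || ((c' == c) && ((r' == r.+1) || (r == r'.+1)))].

Definition press (k i n : nat) (b : board) (r c t : nat) : board :=
  fun r' c' => if affected i n r c r' c' then (b r' c' + t) %% k else b r' c'.

(* Press each button of row r (columns 0, ..., n-1 in turn) the number of
   times in {0..k-1} needed to bring the light above it to state 0. *)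
Definition chase_row (k i n : nat) (b : board) (r : nat) : board :=
  foldl (fun b' c => press k i n b' r c ((k - b' r.-1 c %% k) %% k)) b (iota 0 n).

Definition chase (k i n : nat) (b : board) : board :=
  foldl (chase_row k i n) b (iota 2 i.-1).

Definition all_off (k i n : nat) (b : board) : Prop :=
  forall r c, 1 <= r <= i -> c < n -> b r c %% k = 0.

Definition one_pass_solvable (k i n : nat) (b : board) : Prop :=
  all_off k i n (chase k i n b).

Definition init_board (k q : nat) : board := fun _ _ => k - q.

Fixpoint Sseq (q : int) (j : nat) : int * int :=
  match j with
  | 0 => (0, - q)
  | j'.+1 => let: (a, b) := Sseq q j' in (b, - q - a - 3 * b)
  end%R.
Definition S (q : int) (j : nat) : int := (Sseq q j).1.

(* Main.v *)
Require Import Defs.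
From mathcomp Require Import all_boot all_order all_algebra.
From mathcomp Require Import zify ring.
Import GRing.Theory Num.Theory.

Definition Tm (k x : nat) : nat := (k - x %% k) %% k.

Lemma press_mod k i n b r c t r' c' :
  press k i n b r c t r' c' %% k = (b r' c' + t * affected i n r c r' c') %% k.
Proof.
rewrite /press; case: (affected i n r c r' c') => /=; first by rewrite modn_mod muln1.
by rewrite muln0 addn0.
Qed.

Lemma fold_press_mod k i n r t l (b : board) r' c' :
  foldl (fun b' c => press k i n b' r c t) b l r' c' %% k =
  (b r' c' + t * count (fun c => affected i n r c r' c') l) %% k.
Proof.
elim: l b => [|c l IH] b /=; first by rewrite muln0 addn0.
rewrite IH -modnDml press_mod modnDml mulnDr addnA //.
Qed.

Lemma chase_row_const k i n (b : board) r t :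
  1 <= r -> (forall c, c < n -> Tm k (b r.-1 c) = t) ->
  chase_row k i n b r = foldl (fun b' c => press k i n b' r c t) b (iota 0 n).
Proof.
move=> r1 H; rewrite /chase_row.
have : forall c, c \in iota 0 n -> Tm k (b r.-1 c) = t.
  by move=> c; rewrite mem_iota add0n => /H.
have := iota_uniq 0 n; clear H.
elim: (iota 0 n) b => [|c l IH] b //= /andP[cl ul] Hb.
have -> : (k - b r.-1 c %% k) %% k = t by apply: Hb; rewrite inE eqxx.
apply: IH => // c' c'l.
rewrite -(Hb c'); last by rewrite inE c'l orbT.
rewrite /press.
have -> : affected i n r c r.-1 c' = false.
  have nc : (c' == c) = false.
    by apply/negbTE; apply: contraNneq cl => <-.
  rewrite /affected nc andFb orbF.
  have -> : (r.-1 == r) = false by case: (r) r1 => // r0 _; rewrite /= (ltn_eqF (ltnSn r0)).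
  by rewrite andFb !andbF.
by [].
Qed.

Lemma succ_mod n c : c < n -> c.+1 %% n = if c.+1 == n then 0 else c.+1.
Proof.
move=> cn; case: eqP => [->|ne]; first by rewrite modnn.
rewrite modn_small //; lia.
Qed.
Lemma pred_mod n c : c < n -> (c + n - 1) %% n = if c == 0 then n - 1 else c - 1.
Proof.
move=> cn; case: eqP => [->|ne]; first by rewrite add0n modn_small //; lia.
have -> : c + n - 1 = (c - 1) + n by lia.
rewrite modnDr modn_small //; lia.
Qed.
Lemma modeq n c c' : 0 < n -> c < n -> c' < n -> (c' == c.+1 %% n) = (c == (c' + n - 1) %% n).
Proof. move=> n0 cn c'n; rewrite succ_mod // pred_mod //; case: (c.+1 =P n) => ?; case: (c' =P 0) => ?; apply/idP/idP => /eqP h; apply/eqP; lia. Qed.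
Lemma d1 n c' : 2 < n -> c' < n -> c' != (c' + n - 1) %% n.
Proof. move=> *; rewrite pred_mod //; case: (c' =P 0) => ?; apply/eqP; lia. Qed.
Lemma d2 n c' : 2 < n -> c' < n -> c' != c'.+1 %% n.
Proof. move=> *; rewrite succ_mod //; case: (c'.+1 =P n) => ?; apply/eqP; lia. Qed.
Lemma d3 n c' : 2 < n -> c' < n -> (c' + n - 1) %% n != c'.+1 %% n.
Proof. move=> *; rewrite succ_mod // pred_mod //; case: (c'.+1 =P n) => ?; case: (c' =P 0) => ?; apply/eqP; lia. Qed.

Lemma count_or1 (s : seq nat) a (P : pred nat) :
  ~~ P a -> count (fun c => (c == a) || P c) s = count_mem a s + count P s.
Proof.
move=> Pa; elim: s => [|x s IH] //=; rewrite IH.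
have [->|ne] := eqVneq x a; last by rewrite /= add0n addnCA.
by rewrite (negbTE Pa) /= add0n addnA.
Qed.

Lemma count_iota1 n a : a < n -> count_mem a (iota 0 n) = 1.
Proof. by move=> an; rewrite count_uniq_mem ?iota_uniq // mem_iota add0n an. Qed.

Lemma count_aff i n r r' c' :
  3 <= n -> 1 <= r -> 1 <= r' <= i -> c' < n ->
  count (fun c => affected i n r c r' c') (iota 0 n) =
  if r' == r then 3 else if (r' == r.+1) || (r == r'.+1) then 1 else 0.
Proof.
move=> n3 r1 r'i c'n.
have E : {in iota 0 n, (fun c => affected i n r c r' c') =1
   (fun c => if r' == r then [|| c == c', c == (c' + n - 1) %% n | c == (c'.+1 %% n)]
             else (c == c') && ((r' == r.+1) || (r == r'.+1)))}.
  move=> c; rewrite mem_iota add0n => cn /=.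
  rewrite /affected r'i c'n /=.
  case: eqP => [->|ne] /=.
    have -> : (r == r.+1) = false by lia.
    rewrite andbF orbF eq_sym; congr (_ || _); congr (_ || _).
    by case/andP: cn => _ cn; apply: modeq => //; lia.
  by rewrite eq_sym.
rewrite (eq_in_count E); have [_|_] := eqVneq r' r.
  rewrite count_or1; last by rewrite negb_or d1 // d2.
  rewrite count_or1; last by rewrite d3.
  rewrite !count_iota1 // ?ltn_mod; lia.
case: ifP => h.
  rewrite (eq_count (a2 := fun c => c == c')); last by move=> c; rewrite andbT.
  exact: count_iota1.
by rewrite (eq_count (a2 := pred0)) ?count_pred0 // => c; rewrite andbF.
Qed.

Fixpoint Y (k q m : nat) : nat * nat :=
  match m with
  | 0 => (0, k - q)
  | m'.+1 => let: (a, b) := Y k q m' in (b, (k - q) + Tm k a + 3 * Tm k b)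
  end.

Lemma Y1 k q m : (Y k q m.+1).1 = (Y k q m).2.
Proof. by rewrite /=; case: (Y k q m). Qed.

Lemma Y2 k q m : (Y k q m.+1).2 = (k - q) + Tm k (Y k q m).1 + 3 * Tm k (Y k q m).2.
Proof. by rewrite /=; case: (Y k q m). Qed.

Definition V k q m r' : nat :=
  if r' < m then 0 else if r' == m then (Y k q m).1
  else if r' == m.+1 then (k - q) + Tm k (Y k q m.-1).1 else k - q.

Definition Inv k q i n m (b : board) : Prop :=
  forall r' c, 1 <= r' <= i -> c < n -> b r' c %% k = V k q m r' %% k.

Lemma Tm_cancel k x : 0 < k -> (x + Tm k x) %% k = 0.
Proof.
move=> k0; rewrite /Tm modnDmr -modnDml subnKC ?modnn //.
exact: ltnW (ltn_pmod x k0).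
Qed.

Lemma Tm0 k : Tm k 0 = 0.
Proof. by rewrite /Tm mod0n subn0 modnn. Qed.

Lemma inv1 k q i n : Inv k q i n 1 (init_board k q).
Proof.
move=> r' c /andP[r1 ri] cn; rewrite /V /init_board.
have -> : (r' < 1) = false by lia.
case: (eqVneq r' 1) => [_|ne] //.
case: (eqVneq r' 2) => [_|ne2] //.
by rewrite /= Tm0 addn0.
Qed.

Lemma step k q i n m b : 0 < k -> 3 <= n -> 1 <= m -> m.+1 <= i ->
  Inv k q i n m b -> Inv k q i n m.+1 (chase_row k i n b m.+1).
Proof.
move=> k0 n3 m1 mi H.
have Hm : forall c, c < n -> Tm k (b m c) = Tm k (Y k q m).1.
  move=> c cn; rewrite /Tm H //; last by lia.
  by rewrite /V ltnn eqxx.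
rewrite (@chase_row_const k i n b m.+1 (Tm k (Y k q m).1)) //.
move=> r' c hr cn.
rewrite fold_press_mod -modnDml H // modnDml count_aff //.
have [lt|gt|eq] := ltngtP r' m.
- have h1 : r' < m.+1 by lia.
  have h2 : (r' == m.+1) = false by lia.
  have h3 : (r' == m.+2) = false by lia.
  have h4 : (m.+1 == r'.+1) = false by lia.
  by rewrite /V lt h1 h2 h3 h4 /= muln0.
- have [e1|ne1] := eqVneq r' m.+1.
    subst r'.
    have h2 : (m.+1 == m) = false by lia.
    have h3 : (m.+1 < m) = false by lia.
    rewrite /V ltnn eqxx h3 h2 Y1; case: m m1 {H Hm gt mi hr h2 h3} => // m' _.
    by rewrite Y2 /= -Y1 mulnC.
  have [e2|ne2] := eqVneq r' m.+2.
    subst r'.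
    have h1 : (m.+2 < m) = false by lia.
    have h2 : (m.+2 < m.+1) = false by lia.
    have h3 : (m.+2 == m) = false by lia.
    have h4 : (m.+2 == m.+1) = false by lia.
    by rewrite /V h1 h2 h3 h4 eqxx /= muln1.
  have h1 : (r' < m) = false by lia.
  have h2 : (r' < m.+1) = false by lia.
  have h3 : (r' == m) = false by lia.
  have h4 : (m.+1 == r'.+1) = false by lia.
  have h5 : (r' == m.+1) = false by lia.
  have h6 : (r' == m.+2) = false by lia.
  by rewrite /V h1 h2 h3 h4 h5 h6 /= muln0 addn0.
- subst r'.
  have h2 : (m == m.+1) = false by lia.
  have h3 : (m == m.+2) = false by lia.
  by rewrite /V ltnn eqxx ltnSn h2 h3 /= ?eqxx muln1 Tm_cancel ?mod0n.
Qed.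

Lemma chase_inv k q i n j : 0 < k -> 3 <= n -> j.+1 <= i ->
  Inv k q i n j.+1 (foldl (chase_row k i n) (init_board k q) (iota 2 j)).
Proof.
move=> k0 n3; elim: j => [|j IH] ji; first exact: inv1.
have -> : iota 2 j.+1 = iota 2 j ++ [:: j.+2] by rewrite -(addn1 j) iotaD /= add2n addn1.
rewrite foldl_cat /=.
apply: step => //; apply: IH; lia.
Qed.

Lemma S_cong k q m : 0 < k -> q <= k ->
  (k%:Z %| ((Y k q m).1%:Z - S q%:Z m)%R)%Z && (k%:Z %| ((Y k q m).2%:Z - (Sseq q%:Z m).2)%R)%Z.
Proof.
move=> k0 qk; elim: m => [|m IH].
  rewrite /S /= subr0 dvdz0 /= -subzn // opprK subrK; exact: dvdzz.
move: IH; rewrite /S /=; case: (Y k q m) => a b; case: (Sseq q%:Z m) => A B /=.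
case/andP=> h1 h2; rewrite h2 /=.
have key : forall x, (k%:Z %| ((Tm k x)%:Z + x%:Z)%R)%Z.
  move=> x; rewrite -PoszD dvdzE /= /dvdn addnC.
  by rewrite Tm_cancel.
have -> : ((k - q + Tm k a + 3 * Tm k b)%N%:Z - (- q%:Z - A - 3 * B))%R =
   (k%:Z + (((Tm k a)%:Z + a%:Z) - (a%:Z - A)) + 3 * (((Tm k b)%:Z + b%:Z) - (b%:Z - B)))%R.
  rewrite !PoszD -subzn //; ring.
apply: rpredD; first apply: rpredD; [exact: dvdzz | exact: rpredB (key a) h1 | ].
exact: dvdz_mull (rpredB (key b) h2).
Qed.

Theorem mainTheorem1 (k q n i : nat) :
  2 <= k -> 1 <= q <= k - 1 -> 3 <= n -> 1 <= i ->
  one_pass_solvable k i n (init_board k q) <-> (k%:Z %| S q%:Z i)%Z.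
Proof.
move=> k2 /andP[q1 qk] n3 i1.
have k0 : 0 < k by lia.
have HI := @chase_inv k q i n i.-1 k0 n3 (ltac:(lia)).
rewrite prednK // in HI.
have qk' : q <= k by lia.
case/andP: (@S_cong k q i k0 qk') => hc _.
set y := (Y k q i).1 in hc *.
have Ey : one_pass_solvable k i n (init_board k q) <-> y %% k = 0.
  split.
    move=> H; have := H i 0 (ltac:(lia)) (ltac:(lia)).
    rewrite /chase HI; [by rewrite /V ltnn eqxx | by rewrite i1 leqnn | lia].
  move=> hy r c hr cn; rewrite /chase HI // /V.
  case: ltnP => [_|ge]; first by rewrite mod0n.
  have -> : r = i by lia.
  by rewrite eqxx.
rewrite Ey; split.
  move=> h; have hy : (k%:Z %| y%:Z)%Z by rewrite dvdzE /= /dvdn h.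
  have -> : S q%:Z i = (y%:Z - (y%:Z - S q%:Z i))%R by ring.
  exact: rpredB.
move=> hS; have := rpredD hc hS; rewrite subrK dvdzE /= /dvdn.
by move/eqP.
Qed.
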